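(* Let $e$ be a closed term with $\vdash e:\perp\to X$, where $X$ is a propositional variable. Then for each term $u$ and each finite sequence of terms $\bar v$, $(e\;u)\;\bar v\triangleright^*\underline{\mu}.u$, i.e. $(e\;u)\;\bar v$ reduces to some element of $M_u$.
   Context: $\lambda\mu$-terms: $t::= x\mid \lambda x.t\mid (t\;t)\mid \mu a.t\mid (a\;t)$ over disjoint infinite sets of $\lambda$-variables and $\mu$-variables; types built from propositional variables and $\perp$ with $\to$. Reduction $(\lambda x.u\;v)\triangleright u[x:=v]$, $(\mu a.u\;v)\triangleright\mu a.u[a:=^*v]$ ($u[a:=^*v]$ replaces each subterm $(a\;w)$ of $u$ by $(a\;(w\;v))$), $\triangleright^*$ its reflexive transitive compatible closure. Typing rules: (ax) $\Gamma\vdash x:A;\Delta$ if $x:A\in\Gamma$; ($\to_i$) from $\Gamma,x:A\vdash t:B;\Delta$ infer $\Gamma\vdash\lambda x.t:A\to B;\Delta$; ($\to_e$) from $\Gamma\vdash u:A\to B;\Delta$, $\Gamma\vdash v:A;\Delta$ infer $\Gamma\vdash(u\;v):B;\Delta$; ($\mu$) from $\Gamma\vdash t:\perp;\Delta,a:A$ infer $\Gamma\vdash\mu a.t:A;\Delta$; ($\perp$) from $\Gamma\vdash t:A;\Delta,a:A$ infer $\Gamma\vdash(a\;t):\perp;\Delta,a:A$; $\vdash$ means empty contexts. For a sequence $\bar v=v_1\dots v_n$, $t\;\bar v=((t\;v_1)\dots v_n)$. For a term $t$, $M_t$ is the smallest set containing $t$ such that $w\in M_t$ and $a$ a $\mu$-variable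 imply $\mu a.w\in M_t$ and $(a\;w)\in M_t$; $\underline{\mu}.t$ denotes an arbitrary element of $M_t$. *)

(* Defs.v *)
(* Lambda-mu calculus in de Bruijn representation.
   lambda-variables and mu-variables are two separate index spaces. *)
From Stdlib Require Import List Arith Relations.
Import ListNotations.

Inductive term : Type :=
| Var : nat -> term
| Lam : term -> term               (* \x.t, binds lambda-index 0 *)
| App : term -> term -> term
| Mu : term -> term                (* mu a.t, binds mu-index 0 *)
| NApp : nat -> term -> term.      (* (a t), a a mu-variable *)

Inductive type : Type :=
| TVar : nat -> type
| TBot : type
| TArr : type -> type -> type.

Definition upren (xi : nat -> nat) : nat -> nat :=
  fun n => match n with 0 => 0 | S m => S (xi m) end.

Fixpoint renL (xi : nat -> nat) (t : term) : term :=
  match t with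
  | Var n => Var (xi n)
  | Lam t => Lam (renL (upren xi) t)
  | App t1 t2 => App (renL xi t1) (renL xi t2)
  | Mu t => Mu (renL xi t)
  | NApp a t => NApp a (renL xi t)
  end.

Fixpoint renM (xi : nat -> nat) (t : term) : term :=
  match t with
  | Var n => Var n
  | Lam t => Lam (renM xi t)
  | App t1 t2 => App (renM xi t1) (renM xi t2)
  | Mu t => Mu (renM (upren xi) t)
  | NApp a t => NApp (xi a) (renM xi t)
  end.

Fixpoint substL (sigma : nat -> term) (t : term) : term :=
  match t with
  | Var n => sigma n
  | Lam t => Lam (substL (fun n => match n with
                                   | 0 => Var 0
                                   | S m => renL S (sigma m) end) t)
  | App t1 t2 => App (substL sigma t1) (substL sigma t2)
  | Mu t => Mu (substL (fun n => renM S (sigma n)) t)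
  | NApp a t => NApp a (substL sigma t)
  end.

(* u[x := v] for the lambda-variable bound by an outer Lam *)
Definition subst0 (v : term) (u : term) : term :=
  substL (fun n => match n with 0 => v | S m => Var m end) u.

(* structural substitution u[a :=* v]: every subterm (a w) becomes (a (w v)) *)
Fixpoint ssubst (a : nat) (v : term) (t : term) : term :=
  match t with
  | Var n => Var n
  | Lam t => Lam (ssubst a (renL S v) t)
  | App t1 t2 => App (ssubst a v t1) (ssubst a v t2)
  | Mu t => Mu (ssubst (S a) (renM S v) t)
  | NApp b t => if Nat.eqb b a then NApp b (App (ssubst a v t) v)
                else NApp b (ssubst a v t)
  end.

Inductive step : term -> term -> Prop :=
| step_beta : forall u v, step (App (Lam u) v) (subst0 v u)
| step_mu : forall u v, step (App (Mu u) v) (Mu (ssubst 0 (renM S v) u))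
| step_lam : forall t t', step t t' -> step (Lam t) (Lam t')
| step_appl : forall t t' s, step t t' -> step (App t s) (App t' s)
| step_appr : forall t s s', step s s' -> step (App t s) (App t s')
| step_mu_c : forall t t', step t t' -> step (Mu t) (Mu t')
| step_napp : forall a t t', step t t' -> step (NApp a t) (NApp a t').

Definition reds : term -> term -> Prop := clos_refl_trans term step.

(* typing judgement  Gamma |- t : A ; Delta  (contexts as de Bruijn lists) *)
Inductive typed : list type -> list type -> term -> type -> Prop :=
| ty_ax : forall G D n A, nth_error G n = Some A -> typed G D (Var n) A
| ty_lam : forall G D t A B, typed (A :: G) D t B -> typed G D (Lam t) (TArr A B)
| ty_app : forall G D u v A B,
    typed G D u (TArr A B) -> typed G D v A -> typed G D (App u v) B
| ty_mu : forall G D t A, typed G (A :: D) t TBot -> typed G D (Mu t) A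
| ty_bot : forall G D a t A,
    nth_error D a = Some A -> typed G D t A -> typed G D (NApp a t) TBot.

Definition apps (t : term) (vs : list term) : term := fold_left App vs t.

(* mu-binding of the (free, de Bruijn) mu-name a in w: the de Bruijn
   form of the named term  mu a. w  (if a is not free in w this is just
   mu applied to the shifted w). *)
Definition mu_bind (a : nat) (w : term) : term :=
  Mu (renM (fun k => if Nat.eqb k a then 0 else S k) w).

Inductive inM (t : term) : term -> Prop :=
| inM_base : inM t t
| inM_mu : forall a w, inM t w -> inM t (mu_bind a w)
| inM_napp : forall a w, inM t w -> inM t (NApp a w).

(* Main.v *)
Require Import Defs.
From Stdlib Require Import List Arith Lia Relations FunctionalExtensionality.
Import ListNotations.

Lemma upren_comp f g : (fun n => upren f (upren g n)) = upren (fun n => f (g n)).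
Proof. extensionality n; destruct n; reflexivity. Qed.

Lemma renL_comp t : forall f g, renL f (renL g t) = renL (fun n => f (g n)) t.
Proof. induction t; intros; simpl; f_equal; auto. rewrite IHt, upren_comp; auto. Qed.

Lemma renM_comp t : forall f g, renM f (renM g t) = renM (fun n => f (g n)) t.
Proof. induction t; intros; simpl; f_equal; auto. rewrite IHt, upren_comp; auto. Qed.

Lemma renL_renM t : forall f g, renL f (renM g t) = renM g (renL f t).
Proof. induction t; intros; simpl; f_equal; auto. Qed.

Lemma upren_id : upren (fun k => k) = fun k => k.
Proof. extensionality n; destruct n; reflexivity. Qed.

Lemma renM_id t : renM (fun k => k) t = t.
Proof. induction t; simpl; f_equal; auto. rewrite upren_id; auto. Qed.
Definition up (s : nat -> term) : nat -> term :=
  fun n => match n with 0 => Var 0 | S m => renL S (s m) end.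

Lemma renL_substL t : forall f s, renL f (substL s t) = substL (fun n => renL f (s n)) t.
Proof.
  induction t; intros; simpl; f_equal; auto.
  - rewrite IHt. f_equal. extensionality n; destruct n; simpl; auto.
    rewrite !renL_comp; auto.
  - rewrite IHt. f_equal. extensionality n. apply renL_renM.
Qed.

Lemma substL_renL t : forall f s, substL s (renL f t) = substL (fun n => s (f n)) t.
Proof.
  induction t; intros; simpl; f_equal; auto.
  - rewrite IHt. f_equal. extensionality n; destruct n; simpl; auto.
  - rewrite IHt. auto.
Qed.

Lemma renM_substL t : forall g s, renM g (substL s t) = substL (fun n => renM g (s n)) (renM g t).
Proof.
  induction t; intros; simpl; f_equal; auto.
  - rewrite IHt. f_equal. extensionality n; destruct n; simpl; auto.
    rewrite renL_renM; auto.
  - rewrite IHt. f_equal. extensionality n. rewrite !renM_comp. auto.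
Qed.

Lemma substL_id t : forall s, (forall n, s n = Var n) -> substL s t = t.
Proof.
  induction t; intros; simpl; f_equal; auto.
  - apply IHt. intros [|n]; simpl; auto. rewrite H; auto.
  - apply IHt. intros n. rewrite H; auto.
Qed.

Lemma subst0_renL w t : subst0 w (renL S t) = t.
Proof. unfold subst0. rewrite substL_renL. apply substL_id. auto. Qed.

Lemma renM_apps l : forall h t, renM h (apps t l) = apps (renM h t) (map (renM h) l).
Proof. induction l; intros; simpl; auto. Qed.
Lemma renL_apps l : forall h t, renL h (apps t l) = apps (renL h t) (map (renL h) l).
Proof. induction l; intros; simpl; auto. Qed.
Lemma substL_apps l : forall s t, substL s (apps t l) = apps (substL s t) (map (substL s) l).
Proof. induction l; intros; simpl; auto. Qed.
Lemma ssubst_apps l : forall c x t, ssubst c x (apps t l) = apps (ssubst c x t) (map (ssubst c x) l).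
Proof. induction l; intros; simpl; auto. Qed.
Lemma apps_app l1 : forall l2 t, apps t (l1 ++ l2) = apps (apps t l1) l2.
Proof. unfold apps; intros; apply fold_left_app. Qed.

Lemma ssubst_fresh t : forall g c x, (forall k, g k <> c) -> ssubst c x (renM g t) = renM g t.
Proof.
  induction t; intros; simpl; try (f_equal; solve [auto]).
  - f_equal. apply IHt. intros [|k]; simpl; auto.
  - destruct (Nat.eqb_spec (g n) c). exfalso; eapply H; eauto. f_equal; auto.
Qed.

Lemma ssubst_renM t : forall g c x, (forall b, g b = g c -> b = c) ->
  renM g (ssubst c x t) = ssubst (g c) (renM g x) (renM g t).
Proof.
  induction t; intros; simpl; try (f_equal; solve [auto]).
  - f_equal. rewrite IHt; auto. rewrite renL_renM; auto.
  - f_equal. rewrite IHt. simpl. rewrite !renM_comp. reflexivity.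
    intros [|b]; simpl; try discriminate. intros E; injection E; intro; f_equal; auto.
  - destruct (Nat.eqb_spec n c); destruct (Nat.eqb_spec (g n) (g c)); subst; simpl.
    + f_equal. f_equal; auto.
    + congruence.
    + exfalso; auto.
    + f_equal; auto.
Qed.

Lemma ssubst_renL t : forall f c x, renL f (ssubst c x t) = ssubst c (renL f x) (renL f t).
Proof.
  induction t; intros; simpl; try (f_equal; solve [auto]).
  - f_equal. rewrite IHt. rewrite !renL_comp. reflexivity.
  - f_equal. rewrite IHt, renL_renM; auto.
  - destruct (Nat.eqb n c); simpl; f_equal; auto. f_equal; auto.
Qed.

Fixpoint simK (s : nat -> term) (k : nat -> nat) (r : nat -> list term) (t : term) : term :=
  match t with
  | Var n => s n
  | Lam t => Lam (simK (up s) k (fun a => map (renL S) (r a)) t)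
  | App t1 t2 => App (simK s k r t1) (simK s k r t2)
  | Mu t => Mu (simK (fun n => renM S (s n)) (upren k)
                 (fun a => match a with 0 => nil | S b => map (renM S) (r b) end) t)
  | NApp a t => NApp (k a) (apps (simK s k r t) (r a))
  end.

Lemma renM_simK t : forall h s k r,
  renM h (simK s k r t) = simK (fun n => renM h (s n)) (fun a => h (k a)) (fun a => map (renM h) (r a)) t.
Proof.
  induction t; intros; simpl; auto.
  - f_equal. rewrite IHt. f_equal.
    + extensionality n; destruct n; simpl; auto. rewrite renL_renM; auto.
    + extensionality a. rewrite !map_map. apply map_ext. intros; symmetry; apply renL_renM.
  - f_equal; auto.
  - f_equal. rewrite IHt. f_equal.
    + extensionality n. rewrite !renM_comp. auto.
    + extensionality n; destruct n; auto.
    + extensionality a; destruct a; simpl; auto. rewrite !map_map. apply map_ext.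
      intros; rewrite !renM_comp; auto.
  - f_equal. rewrite renM_apps, IHt. auto.
Qed.

Lemma substL_simK t : forall q s k r,
  substL q (simK s k r t) = simK (fun n => substL q (s n)) k (fun a => map (substL q) (r a)) t.
Proof.
  induction t; intros; simpl; auto.
  - f_equal. rewrite IHt. f_equal.
    + extensionality n; destruct n; simpl; auto. rewrite substL_renL, renL_substL. auto.
    + extensionality a. rewrite !map_map. apply map_ext. intros.
      rewrite substL_renL, renL_substL. auto.
  - f_equal; auto.
  - f_equal. rewrite IHt. f_equal.
    + extensionality n. rewrite renM_substL. auto.
    + extensionality a; destruct a; simpl; auto. rewrite !map_map. apply map_ext.
      intros; rewrite renM_substL; auto.
  - f_equal. rewrite substL_apps, IHt. auto.
Qed.

Lemma simK_id t : forall s k r, (forall n, s n = Var n) -> (forall a, k a = a) -> (forall a, r a = nil) ->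
  simK s k r t = t.
Proof.
  induction t; intros; simpl; auto.
  - f_equal. apply IHt; auto. intros [|n]; simpl; auto. rewrite H; auto.
    intros; rewrite H1; auto.
  - f_equal; auto.
  - f_equal. apply IHt; auto. intros; rewrite H; auto. intros [|a]; simpl; auto.
    intros [|a]; simpl; auto. rewrite H1; auto.
  - rewrite H0, H1. simpl. f_equal; auto.
Qed.

Definition upd (r : nat -> list term) a l := fun b => if Nat.eqb b a then l else r b.

Lemma ssubst_simK t : forall s k r c a0 x,
  (forall a, k a = c <-> a = a0) ->
  (forall n, ssubst c x (s n) = s n) ->
  (forall b y, In y (r b) -> ssubst c x y = y) ->
  ssubst c x (simK s k r t) = simK s k (upd r a0 (r a0 ++ [x])) t.
Proof.
  induction t; intros s k r c a0 x Hk Hs Hr; simpl; auto.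
  - f_equal. rewrite (IHt _ _ _ c a0 (renL S x)); auto.
    + f_equal. extensionality b. unfold upd. destruct (Nat.eqb b a0); auto.
      rewrite map_app; auto.
    + intros [|n]; simpl; auto. rewrite <- ssubst_renL, Hs. auto.
    + intros b y Hy. apply in_map_iff in Hy. destruct Hy as [z [<- Hz]].
      rewrite <- ssubst_renL, (Hr b z); auto.
  - f_equal; eauto.
  - f_equal. rewrite (IHt _ _ _ (S c) (S a0) (renM S x)); auto.
    + f_equal. extensionality b. unfold upd. destruct b; simpl; auto.
      destruct (Nat.eqb b a0); auto. rewrite map_app; auto.
    + intros [|a]; simpl; split; intro H; try discriminate.
      injection H; intro H'. apply Hk in H'. subst; auto.
      injection H; intro H'. f_equal. apply Hk; auto.
    + intros n. change (S c) with (S c). rewrite <- (ssubst_renM _ S c x).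
      rewrite Hs; auto. intros b E; injection E; auto.
    + intros [|b] y Hy; simpl in Hy. contradiction.
      apply in_map_iff in Hy. destruct Hy as [z [<- Hz]].
      rewrite <- (ssubst_renM _ S c x). rewrite (Hr b z); auto.
      intros b' E; injection E; auto.
  - rewrite ssubst_apps, IHt with (a0 := a0); auto.
    rewrite map_ext_in with (g := fun y => y) by (intros; eapply Hr; eauto).
    rewrite map_id. unfold upd.
    destruct (Nat.eqb_spec (k n) c) as [E|E]; destruct (Nat.eqb_spec n a0) as [E2|E2].
    + subst. rewrite apps_app. reflexivity.
    + exfalso. apply E2, Hk, E.
    + exfalso. apply E, Hk, E2.
    + reflexivity.
Qed.

Lemma reds_cong (f : term -> term) : (forall a b, step a b -> step (f a) (f b)) ->
  forall a b, reds a b -> reds (f a) (f b).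
Proof.
  intros Hf a b H. induction H.
  - apply rt_step; auto.
  - apply rt_refl.
  - eapply rt_trans; eauto.
Qed.

Lemma reds_apps l : forall t t', reds t t' -> reds (apps t l) (apps t' l).
Proof.
  induction l; intros; simpl; auto. apply IHl.
  apply (reds_cong (fun z => App z a)); auto. intros; constructor; auto.
Qed.

Lemma mu_apps l : forall s k r t,
  (forall n x, ssubst 0 x (s n) = s n) ->
  (forall a, k a = 0 <-> a = 0) ->
  (forall b y, In y (r b) -> forall x, ssubst 0 x y = y) ->
  reds (apps (Mu (simK s k r t)) l) (Mu (simK s k (upd r 0 (r 0 ++ map (renM S) l)) t)).
Proof.
  induction l as [|v l IH]; intros s k r t Hs Hk Hr; simpl.
  - replace (upd r 0 (r 0 ++ [])) with r. apply rt_refl.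
    extensionality b. unfold upd. rewrite app_nil_r. destruct (Nat.eqb_spec b 0); subst; auto.
  - eapply rt_trans. apply reds_apps. apply rt_step. apply step_mu.
    rewrite ssubst_simK with (a0 := 0); auto.
    eapply rt_trans. apply IH; auto.
    + intros b y Hy. unfold upd in Hy. destruct (Nat.eqb b 0).
      * apply in_app_or in Hy. destruct Hy as [Hy|[<-|[]]]; eauto.
        intros; apply ssubst_fresh. discriminate.
      * eauto.
    + replace (upd (upd r 0 (r 0 ++ [renM S v])) 0 (upd r 0 (r 0 ++ [renM S v]) 0 ++ map (renM S) l))
        with (upd r 0 (r 0 ++ renM S v :: map (renM S) l)). apply rt_refl.
      extensionality b. unfold upd. simpl. rewrite <- app_assoc. auto.
      destruct (Nat.eqb b 0); auto.
    + intros b y Hy; eapply Hr; eauto.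
Qed.

Section Sem.
Variable u : term.

Inductive Q : nat -> term -> Prop :=
| Q_base : forall n, Q n (renM (Nat.add n) u)
| Q_napp : forall n a w, Q n w -> Q n (NApp a w)
| Q_mu : forall n w, Q (S n) w -> Q n (Mu w).

Definition P n t := exists w, reds t w /\ Q n w.

Lemma P_back n t t' : reds t t' -> P n t' -> P n t.
Proof. intros H [w [H1 H2]]. exists w; split; auto. eapply rt_trans; eauto. Qed.

Lemma P_mu n t : P (S n) t -> P n (Mu t).
Proof.
  intros [w [H1 H2]]. exists (Mu w); split. apply (reds_cong Mu); auto.
  intros; constructor; auto. constructor; auto.
Qed.

Lemma P_napp n a t : P n t -> P n (NApp a t).
Proof.
  intros [w [H1 H2]]. exists (NApp a w); split. apply (reds_cong (NApp a)); auto.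
  intros; constructor; auto. constructor; auto.
Qed.

Definition adm n m (h : nat -> nat) := forall k, h (n + k) = m + k.

Fixpoint stk (A : type) (m : nat) (l : list term) : Prop :=
  match A with
  | TVar _ => True
  | TBot => l = nil
  | TArr A B => match l with
                | nil => False
                | w :: l' => (forall m' h, adm m m' h -> forall l0, stk A m' l0 ->
                                P m' (apps (renM h w) l0)) /\ stk B m l'
                end
  end.

Definition real A n t := forall m h, adm n m h -> forall l, stk A m l -> P m (apps (renM h t) l).

Lemma adm_comp n m p h g : adm n m h -> adm m p g -> adm n p (fun x => g (h x)).
Proof. unfold adm; intros H G k. rewrite H, G; auto. Qed.

Lemma adm_id n : adm n n (fun x => x).
Proof. intro; auto. Qed.

Lemma adm_S n : adm n (S n) S.
Proof. intro; auto. Qed.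

Lemma real_mono A n m h t : real A n t -> adm n m h -> real A m (renM h t).
Proof.
  intros R H m' h' H' l Hl. rewrite renM_comp. apply R; auto. eapply adm_comp; eauto.
Qed.

Lemma stk_mono A : forall n m h l, stk A n l -> adm n m h -> stk A m (map (renM h) l).
Proof.
  induction A; intros i j h l Hl H; simpl in *; auto.
  - subst; auto.
  - destruct l as [|w l]; auto. destruct Hl as [H1 H2]. split; eauto.
    apply (real_mono A1 i j h w); auto.
Qed.

Lemma real_bot n t : real TBot n t -> P n t.
Proof. intros R. specialize (R n (fun x => x) (adm_id n) nil eq_refl). simpl in R.
  rewrite renM_id in R; auto. Qed.

End Sem.

Lemma adequacy u G D t A : typed G D t A -> forall n s k r,
  (forall x B, nth_error G x = Some B -> real u B n (s x)) ->
  (forall a B, nth_error D a = Some B -> stk u B n (r a)) ->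
  real u A n (simK s k r t).
Proof.
  induction 1; intros i s k r Hs Hr.
  - simpl; apply Hs; auto.
  - intros m h Hh l Hl. destruct l as [|w l]; [contradiction|]. destruct Hl as [Hw Hl].
    simpl. eapply P_back. apply reds_apps. apply rt_step. apply step_beta.
    unfold subst0. rewrite renM_simK, substL_simK.
    match goal with |- P _ _ (apps (simK ?s1 ?k1 ?r1 t) l) =>
      replace s1 with (fun n => match n with 0 => w | S n' => renM h (s n') end);
      [replace r1 with (fun a => map (renM h) (r a))|] end.
    + specialize (IHtyped m (fun n => match n with 0 => w | S n' => renM h (s n') end)
        (fun a => h (k a)) (fun a => map (renM h) (r a))).
      assert (R : real u B m (simK (fun n => match n with 0 => w | S n' => renM h (s n') end)
        (fun a => h (k a)) (fun a => map (renM h) (r a)) t)).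
      { apply IHtyped.
        - intros [|x] C Hx; simpl in Hx.
          + injection Hx; intros <-. exact Hw.
          + eapply real_mono; eauto.
        - intros a C Ha. eapply stk_mono; eauto. }
      specialize (R m (fun x => x) (adm_id m) l Hl). rewrite renM_id in R. exact R.
    + extensionality a. rewrite !map_map. apply map_ext. intros y.
      rewrite <- renL_renM. symmetry. apply subst0_renL.
    + extensionality n. destruct n; simpl; auto.
      rewrite <- renL_renM. symmetry. apply subst0_renL.
  - intros m h Hh l Hl. simpl.
    apply (IHtyped1 i s k r Hs Hr m h Hh (renM h (simK s k r v) :: l)).
    simpl. split; auto. apply (real_mono u A i m h); auto.
  - intros m h Hh l Hl. rewrite renM_simK. simpl.
    eapply P_back. apply mu_apps.
    + intros n x. apply ssubst_fresh. discriminate.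
    + intros [|a]; simpl; split; intro; auto; discriminate.
    + intros [|b] y Hy x; simpl in Hy. contradiction.
      apply in_map_iff in Hy. destruct Hy as [z [<- _]]. apply ssubst_fresh. discriminate.
    + apply P_mu. apply real_bot. apply IHtyped.
      * intros x C Hx. apply (real_mono u C m (S m) S). eapply real_mono; eauto. apply adm_S.
      * intros [|a] C Ha; unfold upd; simpl in Ha |- *.
        -- injection Ha; intros <-. eapply stk_mono; eauto. apply adm_S.
        -- eapply (stk_mono u C m (S m) S). eapply stk_mono; eauto. apply adm_S.
  - intros m h Hh l Hl. simpl in Hl. subst l. simpl.
    apply P_napp. rewrite renM_apps.
    apply (IHtyped i s k r Hs Hr m h Hh). eapply stk_mono; eauto.
Qed.

Fixpoint boundM (B : nat) (t : term) : Prop :=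
  match t with
  | Var _ => True
  | Lam t => boundM B t
  | App a b => boundM B a /\ boundM B b
  | Mu t => boundM (S B) t
  | NApp a t => a < B /\ boundM B t
  end.

Lemma boundM_mono t : forall B B', boundM B t -> B <= B' -> boundM B' t.
Proof.
  induction t; simpl; intros B B' H1 H2.
  - auto.
  - eauto.
  - destruct H1; split; eauto.
  - eapply IHt; eauto; lia.
  - destruct H1; split; [lia|eauto].
Qed.

Lemma bound_exists t : exists B, boundM B t.
Proof.
  induction t; simpl.
  - exists 0; auto.
  - auto.
  - destruct IHt1 as [B1 H1]; destruct IHt2 as [B2 H2]. exists (max B1 B2).
    split; eapply boundM_mono; eauto; lia.
  - destruct IHt as [B H]. exists B. eapply boundM_mono; eauto.
  - destruct IHt as [B H]. exists (max (S n) B). split. lia. eapply boundM_mono; eauto; lia.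
Qed.

Lemma renM_ext_bound t : forall B f g, boundM B t -> (forall k, k < B -> f k = g k) ->
  renM f t = renM g t.
Proof.
  induction t; simpl; intros B f g Hb Hfg.
  - auto.
  - f_equal; eauto.
  - destruct Hb; f_equal; eauto.
  - f_equal. eapply IHt; eauto. intros [|k] Hk; simpl; auto. f_equal. apply Hfg. lia.
  - destruct Hb. f_equal; eauto.
Qed.

Fixpoint maxf (h : nat -> nat) (B : nat) : nat :=
  match B with 0 => 0 | S B' => max (h B') (maxf h B') end.

Lemma maxf_spec h B k : k < B -> h k <= maxf h B.
Proof.
  induction B; simpl; intros. lia.
  destruct (Nat.eq_dec k B). subst; lia. specialize (IHB ltac:(lia)). lia.
Qed.

Lemma Q_inM u n w : Q u n w -> forall h, (forall k, h (n + k) = k) -> inM u (renM h w).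
Proof.
  induction 1; intros h Hh; simpl.
  - rewrite renM_comp. replace (fun k => h (n + k)) with (fun k:nat => k)
      by (extensionality k; auto). rewrite renM_id. constructor.
  - constructor. auto.
  - destruct (bound_exists w) as [B HB].
    set (c := S (maxf h B)).
    assert (IH : inM u (renM (fun j => match j with 0 => c | S k => h k end) w)).
    { apply IHQ. intros k; simpl; auto. }
    apply (inM_mu _ c) in IH. unfold mu_bind in IH. rewrite renM_comp in IH.
    erewrite renM_ext_bound in IH; eauto.
    intros [|j] Hj; simpl.
    + rewrite Nat.eqb_refl; auto.
    + destruct (Nat.eqb_spec (h j) c); auto.
      pose proof (maxf_spec h B j ltac:(lia)). unfold c in *. lia.
Qed.

Theorem mainTheorem8 :
  forall (e : term) (X : nat),
    typed nil nil e (TArr TBot (TVar X)) ->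
    forall (u : term) (vs : list term),
      exists w, inM u w /\ reds (apps (App e u) vs) w.
Proof.
  intros e X He u vs.
  pose proof (adequacy u _ _ _ _ He 0 Var (fun a => a) (fun _ => nil)) as R.
  rewrite simK_id in R; auto.
  assert (Hp : P u 0 (apps (renM (fun x => x) e) (u :: vs))).
  { apply R; [intros x B Hx; destruct x; discriminate|intros a B Ha; destruct a; discriminate|
              apply adm_id|].
    simpl. split; auto. intros m' h Hh l Hl. simpl in Hl. subst l. simpl.
    exists (renM h u). split. apply rt_refl.
    replace (renM h u) with (renM (Nat.add m') u). constructor.
    f_equal. extensionality k. rewrite <- Hh. auto. }
  rewrite renM_id in Hp. destruct Hp as [w [Hr Hq]].
  exists w. split; auto. rewrite <- (renM_id w). eapply Q_inM; eauto.
Qed.
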